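(* Let $\gamma:I\to\mathbb{R}^2$ be a $C^\infty$ curve with $0\in I$, $\gamma'(0)=\gamma''(0)=\gamma'''(0)=\mathbf{0}$ and $\gamma^{(4)}(0)\neq\mathbf{0}$. Then for every $C^\infty$ diffeomorphism germ $\psi$ of $(\mathbb{R},0)$ onto $(\mathbb{R},0)$ and every congruence $\Phi(x)=Rx+b$ of $\mathbb{R}^2$ ($R\in O(2)$, $b\in\mathbb{R}^2$), the curves $\gamma\circ\psi$ and $\Phi\circ\gamma$ have the same $(4,5;\pm7)$-cuspidal curvature $\kappa_q$ as $\gamma$.
   Context: For a curve $c$ with $c'(0)=c''(0)=c'''(0)=\mathbf{0}$ and $c^{(4)}(0)\neq\mathbf{0}$, set $A=\det(c^{(5)}(0),c^{(4)}(0))$, $B=\det(c^{(6)}(0),c^{(4)}(0))$, $C=\det(c^{(7)}(0),c^{(4)}(0))$, $D=\det(c^{(6)}(0),c^{(5)}(0))$; the $(4,5;\pm7)$-cuspidal curvature is $\kappa_q=\dfrac{-77B^2+105AD+60AC}{\|c^{(4)}(0)\|^5}$, where $\|\cdot\|$ is the Euclidean norm. *)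

(* Defs.v *)
From Stdlib Require Import Reals.
From Coquelicot Require Import Coquelicot.
Open Scope R_scope.

(* A plane curve is given by its two coordinate functions x, y : R -> R. *)

Definition smooth_on (U : R -> Prop) (f : R -> R) : Prop :=
  forall (n : nat) (t : R), U t -> ex_derive_n f n t.

Definition in_interval (a b : Rbar) (t : R) : Prop := Rbar_lt a t /\ Rbar_lt t b.

Definition det2 (u1 u2 v1 v2 : R) : R := u1 * v2 - u2 * v1.

Definition cusp_curv (x y : R -> R) : R :=
  let x4 := Derive_n x 4 0 in let y4 := Derive_n y 4 0 in
  let x5 := Derive_n x 5 0 in let y5 := Derive_n y 5 0 in
  let x6 := Derive_n x 6 0 in let y6 := Derive_n y 6 0 in
  let x7 := Derive_n x 7 0 in let y7 := Derive_n y 7 0 in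
  let A := det2 x5 y5 x4 y4 in
  let B := det2 x6 y6 x4 y4 in
  let C := det2 x7 y7 x4 y4 in
  let D := det2 x6 y6 x5 y5 in
  (-77 * B ^ 2 + 105 * A * D + 60 * A * C) / (sqrt (x4 ^ 2 + y4 ^ 2)) ^ 5.

(* Main.v *)
Require Import Defs.
From Stdlib Require Import Reals Lra.
From Coquelicot Require Import Coquelicot.
Open Scope R_scope.

Definition E0 (f psi : R -> R) (t : R) : R :=
  (Derive_n f 0 (psi t)).
Definition E1 (f psi : R -> R) (t : R) : R :=
  (Derive_n f 1 (psi t) * (Derive_n psi 1 t)).
Definition E2 (f psi : R -> R) (t : R) : R :=
  (Derive_n f 1 (psi t) * (Derive_n psi 2 t)) +
  (Derive_n f 2 (psi t) * (Derive_n psi 1 t * (Derive_n psi 1 t))).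
Definition E3 (f psi : R -> R) (t : R) : R :=
  (Derive_n f 1 (psi t) * (Derive_n psi 3 t)) +
  3 * (Derive_n f 2 (psi t) * (Derive_n psi 1 t * (Derive_n psi 2 t))) +
  (Derive_n f 3 (psi t) * (Derive_n psi 1 t * (Derive_n psi 1 t * (Derive_n psi 1 t)))).
Definition E4 (f psi : R -> R) (t : R) : R :=
  (Derive_n f 1 (psi t) * (Derive_n psi 4 t)) +
  3 * (Derive_n f 2 (psi t) * (Derive_n psi 2 t * (Derive_n psi 2 t))) +
  4 * (Derive_n f 2 (psi t) * (Derive_n psi 1 t * (Derive_n psi 3 t))) +
  6 * (Derive_n f 3 (psi t) * (Derive_n psi 1 t * (Derive_n psi 1 t * (Derive_n psi 2 t)))) +
  (Derive_n f 4 (psi t) * (Derive_n psi 1 t * (Derive_n psi 1 t * (Derive_n psi 1 t * (Derive_n psi 1 t))))).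
Definition E5 (f psi : R -> R) (t : R) : R :=
  (Derive_n f 1 (psi t) * (Derive_n psi 5 t)) +
  10 * (Derive_n f 2 (psi t) * (Derive_n psi 2 t * (Derive_n psi 3 t))) +
  5 * (Derive_n f 2 (psi t) * (Derive_n psi 1 t * (Derive_n psi 4 t))) +
  15 * (Derive_n f 3 (psi t) * (Derive_n psi 1 t * (Derive_n psi 2 t * (Derive_n psi 2 t)))) +
  10 * (Derive_n f 3 (psi t) * (Derive_n psi 1 t * (Derive_n psi 1 t * (Derive_n psi 3 t)))) +
  10 * (Derive_n f 4 (psi t) * (Derive_n psi 1 t * (Derive_n psi 1 t * (Derive_n psi 1 t * (Derive_n psi 2 t))))) +
  (Derive_n f 5 (psi t) * (Derive_n psi 1 t * (Derive_n psi 1 t * (Derive_n psi 1 t * (Derive_n psi 1 t * (Derive_n psi 1 t)))))).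
Definition E6 (f psi : R -> R) (t : R) : R :=
  (Derive_n f 1 (psi t) * (Derive_n psi 6 t)) +
  10 * (Derive_n f 2 (psi t) * (Derive_n psi 3 t * (Derive_n psi 3 t))) +
  15 * (Derive_n f 2 (psi t) * (Derive_n psi 2 t * (Derive_n psi 4 t))) +
  6 * (Derive_n f 2 (psi t) * (Derive_n psi 1 t * (Derive_n psi 5 t))) +
  15 * (Derive_n f 3 (psi t) * (Derive_n psi 2 t * (Derive_n psi 2 t * (Derive_n psi 2 t)))) +
  60 * (Derive_n f 3 (psi t) * (Derive_n psi 1 t * (Derive_n psi 2 t * (Derive_n psi 3 t)))) +
  15 * (Derive_n f 3 (psi t) * (Derive_n psi 1 t * (Derive_n psi 1 t * (Derive_n psi 4 t)))) +
  45 * (Derive_n f 4 (psi t) * (Derive_n psi 1 t * (Derive_n psi 1 t * (Derive_n psi 2 t * (Derive_n psi 2 t))))) +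
  20 * (Derive_n f 4 (psi t) * (Derive_n psi 1 t * (Derive_n psi 1 t * (Derive_n psi 1 t * (Derive_n psi 3 t))))) +
  15 * (Derive_n f 5 (psi t) * (Derive_n psi 1 t * (Derive_n psi 1 t * (Derive_n psi 1 t * (Derive_n psi 1 t * (Derive_n psi 2 t)))))) +
  (Derive_n f 6 (psi t) * (Derive_n psi 1 t * (Derive_n psi 1 t * (Derive_n psi 1 t * (Derive_n psi 1 t * (Derive_n psi 1 t * (Derive_n psi 1 t))))))).
Definition E7 (f psi : R -> R) (t : R) : R :=
  (Derive_n f 1 (psi t) * (Derive_n psi 7 t)) +
  35 * (Derive_n f 2 (psi t) * (Derive_n psi 3 t * (Derive_n psi 4 t))) +
  21 * (Derive_n f 2 (psi t) * (Derive_n psi 2 t * (Derive_n psi 5 t))) +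
  7 * (Derive_n f 2 (psi t) * (Derive_n psi 1 t * (Derive_n psi 6 t))) +
  105 * (Derive_n f 3 (psi t) * (Derive_n psi 2 t * (Derive_n psi 2 t * (Derive_n psi 3 t)))) +
  70 * (Derive_n f 3 (psi t) * (Derive_n psi 1 t * (Derive_n psi 3 t * (Derive_n psi 3 t)))) +
  105 * (Derive_n f 3 (psi t) * (Derive_n psi 1 t * (Derive_n psi 2 t * (Derive_n psi 4 t)))) +
  21 * (Derive_n f 3 (psi t) * (Derive_n psi 1 t * (Derive_n psi 1 t * (Derive_n psi 5 t)))) +
  105 * (Derive_n f 4 (psi t) * (Derive_n psi 1 t * (Derive_n psi 2 t * (Derive_n psi 2 t * (Derive_n psi 2 t))))) +
  210 * (Derive_n f 4 (psi t) * (Derive_n psi 1 t * (Derive_n psi 1 t * (Derive_n psi 2 t * (Derive_n psi 3 t))))) +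
  35 * (Derive_n f 4 (psi t) * (Derive_n psi 1 t * (Derive_n psi 1 t * (Derive_n psi 1 t * (Derive_n psi 4 t))))) +
  105 * (Derive_n f 5 (psi t) * (Derive_n psi 1 t * (Derive_n psi 1 t * (Derive_n psi 1 t * (Derive_n psi 2 t * (Derive_n psi 2 t)))))) +
  35 * (Derive_n f 5 (psi t) * (Derive_n psi 1 t * (Derive_n psi 1 t * (Derive_n psi 1 t * (Derive_n psi 1 t * (Derive_n psi 3 t)))))) +
  21 * (Derive_n f 6 (psi t) * (Derive_n psi 1 t * (Derive_n psi 1 t * (Derive_n psi 1 t * (Derive_n psi 1 t * (Derive_n psi 1 t * (Derive_n psi 2 t))))))) +
  (Derive_n f 7 (psi t) * (Derive_n psi 1 t * (Derive_n psi 1 t * (Derive_n psi 1 t * (Derive_n psi 1 t * (Derive_n psi 1 t * (Derive_n psi 1 t * (Derive_n psi 1 t)))))))).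

Lemma D_eq (f : R -> R) (t l l' : R) : is_derive f t l -> l = l' -> is_derive f t l'.
Proof. intros H ->; exact H. Qed.
Lemma D_plus (f g : R -> R) t a b : is_derive f t a -> is_derive g t b ->
  is_derive (fun u => f u + g u) t (a + b).
Proof. intros H H0; exact (is_derive_plus _ _ _ _ _ H H0). Qed.
Lemma D_mult (f g : R -> R) t a b : is_derive f t a -> is_derive g t b ->
  is_derive (fun u => f u * g u) t (a * g t + f t * b).
Proof. intros H H0; exact (is_derive_mult _ _ _ _ _ H H0 Rmult_comm). Qed.
Lemma D_const (c t : R) : is_derive (fun _ => c) t 0.
Proof. exact (is_derive_const c t). Qed.

Lemma step (U : R -> Prop) (F E E' : R -> R) k : open U ->
  (forall t, U t -> Derive_n F k t = E t) ->
  (forall t, U t -> is_derive E t (E' t)) ->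
  forall t, U t -> Derive_n F (S k) t = E' t.
Proof.
  intros HU HE HD t Ht. change (Derive (Derive_n F k) t = E' t).
  rewrite (Derive_ext_loc _ E).
  - apply is_derive_unique, HD, Ht.
  - apply (filter_imp U); [intros u Hu; apply HE, Hu | apply HU, Ht].
Qed.

Ltac dsolve dX dP := repeat match goal with
| |- is_derive (fun u => Derive_n ?f ?j (?psi u)) _ _ => apply dX
| |- is_derive (fun u => Derive_n ?psi ?i u) _ _ => apply dP
| |- is_derive (Derive_n _ _) _ _ => apply dP
| |- is_derive (fun u => _ + _) _ _ => apply D_plus
| |- is_derive (fun u => _ * _) _ _ => apply D_mult
| |- is_derive (fun _ => _) _ _ => apply D_const
end.

Lemma comp_derivs (a b : Rbar) (f psi : R -> R) (eps : R) :
  smooth_on (in_interval a b) f -> smooth_on (fun t => -eps < t < eps) psi ->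
  (forall t, -eps < t < eps -> in_interval a b (psi t)) ->
  forall t, -eps < t < eps ->
  Derive_n (fun t => f (psi t)) 4 t = E4 f psi t /\ Derive_n (fun t => f (psi t)) 5 t = E5 f psi t /\
  Derive_n (fun t => f (psi t)) 6 t = E6 f psi t /\ Derive_n (fun t => f (psi t)) 7 t = E7 f psi t.
Proof.
  intros hf hpsi hin. set (F := fun t => f (psi t)).
  assert (HU : open (fun t => -eps < t < eps)).
  { apply open_and; [apply open_gt | apply open_lt]. }
  assert (dXall : forall t, -eps < t < eps -> forall j,
     is_derive (fun u => Derive_n f j (psi u)) t (Derive_n f (S j) (psi t) * Derive_n psi 1 t)).
  { intros t Ht j.
    assert (H1 : is_derive (Derive_n f j) (psi t) (Derive_n f (S j) (psi t))).
    { apply (Derive_correct (Derive_n f j) (psi t)). exact (hf (S j) (psi t) (hin t Ht)). }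
    assert (H2 : is_derive psi t (Derive_n psi 1 t)).
    { apply (Derive_correct psi t). exact (hpsi 1%nat t Ht). }
    rewrite Rmult_comm; exact (is_derive_comp (Derive_n f j) psi t _ _ H1 H2). }
  assert (dPall : forall t, -eps < t < eps -> forall i,
     is_derive (Derive_n psi i) t (Derive_n psi (S i) t)).
  { intros t Ht i. apply (Derive_correct (Derive_n psi i) t). exact (hpsi (S i) t Ht). }
  assert (H0 : forall t, -eps < t < eps -> Derive_n F 0 t = E0 f psi t) by (intros; reflexivity).
  assert (H1 : forall t, -eps < t < eps -> Derive_n F 1 t = E1 f psi t).
  { apply (step _ F (E0 f psi) (E1 f psi) 0 HU H0).
    intros t Ht; pose proof (dXall t Ht) as dX; pose proof (dPall t Ht) as dP.
    cbv beta delta [E0 E1]; eapply D_eq; [dsolve dX dP | cbv beta; ring]. }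
  assert (H2 : forall t, -eps < t < eps -> Derive_n F 2 t = E2 f psi t).
  { apply (step _ F (E1 f psi) (E2 f psi) 1 HU H1).
    intros t Ht; pose proof (dXall t Ht) as dX; pose proof (dPall t Ht) as dP.
    cbv beta delta [E1 E2]; eapply D_eq; [dsolve dX dP | cbv beta; ring]. }
  assert (H3 : forall t, -eps < t < eps -> Derive_n F 3 t = E3 f psi t).
  { apply (step _ F (E2 f psi) (E3 f psi) 2 HU H2).
    intros t Ht; pose proof (dXall t Ht) as dX; pose proof (dPall t Ht) as dP.
    cbv beta delta [E2 E3]; eapply D_eq; [dsolve dX dP | cbv beta; ring]. }
  assert (H4 : forall t, -eps < t < eps -> Derive_n F 4 t = E4 f psi t).
  { apply (step _ F (E3 f psi) (E4 f psi) 3 HU H3).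
    intros t Ht; pose proof (dXall t Ht) as dX; pose proof (dPall t Ht) as dP.
    cbv beta delta [E3 E4]; eapply D_eq; [dsolve dX dP | cbv beta; ring]. }
  assert (H5 : forall t, -eps < t < eps -> Derive_n F 5 t = E5 f psi t).
  { apply (step _ F (E4 f psi) (E5 f psi) 4 HU H4).
    intros t Ht; pose proof (dXall t Ht) as dX; pose proof (dPall t Ht) as dP.
    cbv beta delta [E4 E5]; eapply D_eq; [dsolve dX dP | cbv beta; ring]. }
  assert (H6 : forall t, -eps < t < eps -> Derive_n F 6 t = E6 f psi t).
  { apply (step _ F (E5 f psi) (E6 f psi) 5 HU H5).
    intros t Ht; pose proof (dXall t Ht) as dX; pose proof (dPall t Ht) as dP.
    cbv beta delta [E5 E6]; eapply D_eq; [dsolve dX dP | cbv beta; ring]. }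
  assert (H7 : forall t, -eps < t < eps -> Derive_n F 7 t = E7 f psi t).
  { apply (step _ F (E6 f psi) (E7 f psi) 6 HU H6).
    intros t Ht; pose proof (dXall t Ht) as dX; pose proof (dPall t Ht) as dP.
    cbv beta delta [E6 E7]; eapply D_eq; [dsolve dX dP | cbv beta; ring]. }
  intros t Ht; repeat split; auto.
Qed.

Lemma p1_nz (psi phi : R -> R) (eps del : R) : 0 < eps -> 0 < del ->
  smooth_on (fun t => -eps < t < eps) psi -> smooth_on (fun s => -del < s < del) phi ->
  (forall t, -eps < t < eps -> phi (psi t) = t) -> psi 0 = 0 ->
  Derive_n psi 1 0 <> 0.
Proof.
  intros he hd hpsi hphi hinv h0.
  assert (A : is_derive psi 0 (Derive psi 0)).
  { apply Derive_correct. exact (hpsi 1%nat 0 ltac:(lra)). }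
  assert (B : is_derive phi (psi 0) (Derive phi 0)).
  { rewrite h0. apply Derive_correct. exact (hphi 1%nat 0 ltac:(lra)). }
  pose proof (is_derive_comp phi psi 0 _ _ B A) as C.
  assert (D : is_derive (fun x => phi (psi x)) 0 1).
  { apply (is_derive_ext_loc (fun x => x)).
    - assert (HU : open (fun t => -eps < t < eps)) by (apply open_and; [apply open_gt | apply open_lt]).
      apply (filter_imp (fun t => -eps < t < eps)).
      + intros u Hu. symmetry. apply hinv, Hu.
      + apply HU. simpl. lra.
    - apply (is_derive_id 0). }
  apply is_derive_unique in C. apply is_derive_unique in D.
  rewrite D in C. change (Derive psi 0 <> 0). intro Z. rewrite Z in C.
  unfold scal in C; simpl in C; unfold mult in C; simpl in C. lra.
Qed.

Lemma lin_derivs (a b : Rbar) (f g : R -> R) (r s c : R) :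
  smooth_on (in_interval a b) f -> smooth_on (in_interval a b) g ->
  forall k t, in_interval a b t ->
  Derive_n (fun t => r * f t + s * g t + c) (S k) t = r * Derive_n f (S k) t + s * Derive_n g (S k) t.
Proof.
  intros hf hg.
  assert (HU : open (in_interval a b)) by (apply open_and; [apply open_Rbar_gt | apply open_Rbar_lt]).
  induction k as [|k IH].
  - apply (step _ _ (fun t => r * f t + s * g t + c) _ 0 HU); [intros; reflexivity|].
    intros t Ht. eapply D_eq.
    + apply D_plus; [apply D_plus|apply D_const]; (apply D_mult; [apply D_const|apply Derive_correct]).
      * exact (hf 1%nat t Ht).
      * exact (hg 1%nat t Ht).
    + change (Derive_n f 1 t) with (Derive f t); change (Derive_n g 1 t) with (Derive g t); cbv beta; ring.
  - apply (step _ _ _ _ (S k) HU IH).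
    intros t Ht. eapply D_eq.
    + apply D_plus; (apply D_mult; [apply D_const|apply Derive_correct]).
      * exact (hf (S (S k)) t Ht).
      * exact (hg (S (S k)) t Ht).
    + cbv beta; change (Derive_n f (S (S k)) t) with (Derive (Derive_n f (S k)) t); change (Derive_n g (S (S k)) t) with (Derive (Derive_n g (S k)) t); ring.
Qed.

Theorem mainTheorem10 (a b : Rbar) (x y : R -> R)
  (ha : Rbar_lt a 0) (hb : Rbar_lt 0 b)
  (hx : smooth_on (in_interval a b) x) (hy : smooth_on (in_interval a b) y)
  (h1 : Derive_n x 1 0 = 0 /\ Derive_n y 1 0 = 0)
  (h2 : Derive_n x 2 0 = 0 /\ Derive_n y 2 0 = 0)
  (h3 : Derive_n x 3 0 = 0 /\ Derive_n y 3 0 = 0)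
  (h4 : Derive_n x 4 0 <> 0 \/ Derive_n y 4 0 <> 0) :
  (forall (psi phi : R -> R) (eps del : R),
      0 < eps -> 0 < del ->
      smooth_on (fun t => -eps < t < eps) psi ->
      smooth_on (fun s => -del < s < del) phi ->
      (forall t, -eps < t < eps -> -del < psi t < del) ->
      (forall s, -del < s < del -> -eps < phi s < eps) ->
      (forall t, -eps < t < eps -> phi (psi t) = t) ->
      (forall s, -del < s < del -> psi (phi s) = s) ->
      psi 0 = 0 ->
      (forall t, -eps < t < eps -> in_interval a b (psi t)) ->
      cusp_curv (fun t => x (psi t)) (fun t => y (psi t)) = cusp_curv x y)
  /\
  (forall (r11 r12 r21 r22 b1 b2 : R),
      r11 * r11 + r21 * r21 = 1 ->
      r12 * r12 + r22 * r22 = 1 ->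
      r11 * r12 + r21 * r22 = 0 ->
      cusp_curv (fun t => r11 * x t + r12 * y t + b1)
                (fun t => r21 * x t + r22 * y t + b2) = cusp_curv x y).
Proof.
  assert (Hpos : 0 < Derive_n x 4 0 ^ 2 + Derive_n y 4 0 ^ 2).
  { destruct h4 as [h|h].
    - pose proof (Rsqr_pos_lt _ h). pose proof (pow2_ge_0 (Derive_n y 4 0)). unfold Rsqr in *. nra.
    - pose proof (Rsqr_pos_lt _ h). pose proof (pow2_ge_0 (Derive_n x 4 0)). unfold Rsqr in *. nra. }
  assert (Hs : 0 < sqrt (Derive_n x 4 0 ^ 2 + Derive_n y 4 0 ^ 2)) by (apply sqrt_lt_R0; exact Hpos).
  destruct h1 as [x1 y1]; destruct h2 as [x2 y2]; destruct h3 as [x3 y3].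
  split.
  - intros psi phi eps del he hd hpsi hphi _ _ hinv _ h0 hin.
    pose proof (p1_nz psi phi eps del he hd hpsi hphi hinv h0) as hp.
    destruct (comp_derivs a b x psi eps hx hpsi hin 0 ltac:(lra)) as [X4 [X5 [X6 X7]]].
    destruct (comp_derivs a b y psi eps hy hpsi hin 0 ltac:(lra)) as [Y4 [Y5 [Y6 Y7]]].
    unfold cusp_curv, det2; cbv zeta.
    rewrite X4, X5, X6, X7, Y4, Y5, Y6, Y7.
    unfold E4, E5, E6, E7. rewrite h0, x1, x2, x3, y1, y2, y3.
    set (p1 := Derive_n psi 1 0) in *.
    set (e2 := Derive_n x 4 0 ^ 2 + Derive_n y 4 0 ^ 2) in *.
    match goal with |- ?L / sqrt ?e1 ^ 5 = ?R / sqrt e2 ^ 5 =>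
      assert (He : e1 = (p1 ^ 4) ^ 2 * e2) by (unfold e2; ring);
      assert (HN : L = (p1 ^ 4) ^ 5 * R) by ring;
      rewrite He, HN end.
    rewrite sqrt_mult by (try apply pow2_ge_0; lra).
    rewrite sqrt_pow2 by (replace (p1 ^ 4) with ((p1 ^ 2) ^ 2) by ring; apply pow2_ge_0).
    field. repeat split; first [exact hp | lra | apply pow_nonzero; exact hp].
  - intros r11 r12 r21 r22 b1 b2 o1 o2 o3.
    assert (H0 : in_interval a b 0) by (split; assumption).
    pose proof (lin_derivs a b x y r11 r12 b1 hx hy) as L1.
    pose proof (lin_derivs a b x y r21 r22 b2 hx hy) as L2.
    unfold cusp_curv, det2; cbv zeta.
    rewrite (L1 3%nat 0 H0), (L1 4%nat 0 H0), (L1 5%nat 0 H0), (L1 6%nat 0 H0).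
    rewrite (L2 3%nat 0 H0), (L2 4%nat 0 H0), (L2 5%nat 0 H0), (L2 6%nat 0 H0).
    set (d := r11 * r22 - r12 * r21).
    assert (Hd : d ^ 2 = 1).
    { replace (d ^ 2) with ((r11*r11+r21*r21)*(r12*r12+r22*r22) - (r11*r12+r21*r22)^2) by (unfold d; ring).
      rewrite o1, o2, o3. ring. }
    match goal with |- ?L / sqrt ?e1 ^ 5 = ?R / sqrt ?e2 ^ 5 =>
      assert (He : e1 = e2);
      [ replace e1 with ((r11*r11+r21*r21)*Derive_n x 4 0 ^ 2 + 2*(r11*r12+r21*r22)*Derive_n x 4 0 * Derive_n y 4 0
                         + (r12*r12+r22*r22)*Derive_n y 4 0 ^ 2) by ring;
        rewrite o1, o2, o3; ring
      | assert (HN : L = d ^ 2 * R) by (unfold d; ring);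
        rewrite He, HN, Hd; field; lra ] end.
Qed.
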